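(* Under the standing assumptions, suppose $\varphi$ is lower semicontinuous on $X$. Let $\rho_k\to\infty$ and $\sigma_k\to0$ with $\rho_k,\sigma_k>0$, and let $x_k\in\arg\min_{x\in X}\varphi_{\rho_k,\sigma_k}(x)$ for each $k$. Then every accumulation point $\bar x$ of $\{x_k\}$ satisfies $\bar x\in\arg\min_{x\in X}\varphi(x)$. Moreover, if $x_{k_j}\to\bar x$ along a subsequence, then every accumulation point $\bar y$ of $\{y^*_{\rho_{k_j},\sigma_{k_j}}(x_{k_j})\}$ belongs to $\arg\max\{f(\bar x,y): y\in Y,\ c(\bar x,y)\le 0\}$.
   Context: Standing assumptions: $X\subset\mathbb{R}^n$ and $Y\subset\mathbb{R}^m$ are nonempty, convex and compact. $f:X\times Y\to\mathbb{R}$ is continuously differentiable with Lipschitz continuous gradient on $X\times Y$, $f(x,\cdot)$ concave on $Y$. $c=(c_1,\dots,c_p)$ has continuously differentiable components with Lipschitz gradients, each $c_i(x,\cdot)$ convex on $Y$. For every $x\in X$, $\Theta(x):=\{y\in Y: c(x,y)\le 0\}\neq\emptyset$. Notation: $[z]_+=\max\{z,0\}$ componentwise; $\varphi(x):=\max\{f(x,y): y\in\Theta(x)\}$; $\psi_{\rho,\sigma}(x,y):=f(x,y)-\frac{\rho}{2}\|[c(x,y)]_+\|^2-\frac{\sigma}{2}\|y\|^2$; $\varphi_{\rho,\sigma}(x):=\max_{y\in Y}\psi_{\rho,\sigma}(x,y)$; $y^*_{\rho,\sigma}(x)$ is the unique maximizer of $\psi_{\rho,\sigma}(x,\cdot)$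 over $Y$. *)

(* Defs.v *)
From HB Require Import structures.
From mathcomp Require Import all_boot all_order all_algebra.
From mathcomp Require Import all_classical all_reals all_analysis.
Set Implicit Arguments. Unset Strict Implicit. Unset Printing Implicit Defensive.
Import Order.TTheory GRing.Theory Num.Theory.
Import numFieldNormedType.Exports.
Local Open Scope classical_set_scope.
Local Open Scope ring_scope.

Section Defs.
Variable R : realType.

Definition sqnorm (m : nat) (y : 'rV[R]_m) : R := \sum_(i < m) (y ord0 i) ^+ 2.

Definition convex_on (m : nat) (S : set 'rV[R]_m) (g : 'rV[R]_m -> R) : Prop :=
  forall u v t, S u -> S v -> 0 <= t <= 1 ->
    g (t *: u + (1 - t) *: v) <= t * g u + (1 - t) * g v.

Definition concave_on (m : nat) (S : set 'rV[R]_m) (g : 'rV[R]_m -> R) : Prop :=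
  convex_on S (fun y => - g y).

(* F : R^n x R^m -> R is differentiable at every point of X x Y and its
   gradient is Lipschitz on X x Y (operator-norm form: for every direction v,
   |DF(p)v - DF(q)v| <= L |p - q| |v|). *)
Definition C11_on (n m : nat) (X : set 'rV[R]_n) (Y : set 'rV[R]_m)
    (F : 'rV[R]_n -> 'rV[R]_m -> R) : Prop :=
  let G := fun p : 'rV[R]_n * 'rV[R]_m => F p.1 p.2 in
  (forall p, X p.1 -> Y p.2 -> differentiable G p) /\
  exists L : R, forall p q v, X p.1 -> Y p.2 -> X q.1 -> Y q.2 ->
    `|'D_v G p - 'D_v G q| <= L * `|p - q| * `|v|.

Definition lsc_on (n : nat) (X : set 'rV[R]_n) (g : 'rV[R]_n -> R) : Prop :=
  forall x, X x -> forall a, a < g x -> \forall z \near x, X z -> a < g z.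

Definition Theta (n m p : nat) (Y : set 'rV[R]_m)
    (c : 'I_p -> 'rV[R]_n -> 'rV[R]_m -> R) (x : 'rV[R]_n) : set 'rV[R]_m :=
  [set y | Y y /\ forall i, c i x y <= 0].

Definition phi (n m p : nat) (Y : set 'rV[R]_m) (f : 'rV[R]_n -> 'rV[R]_m -> R)
    (c : 'I_p -> 'rV[R]_n -> 'rV[R]_m -> R) (x : 'rV[R]_n) : R :=
  sup [set f x y | y in Theta Y c x].

Definition psi (n m p : nat) (f : 'rV[R]_n -> 'rV[R]_m -> R)
    (c : 'I_p -> 'rV[R]_n -> 'rV[R]_m -> R) (rho sigma : R)
    (x : 'rV[R]_n) (y : 'rV[R]_m) : R :=
  f x y - rho / 2 * (\sum_(i < p) (Num.max (c i x y) 0) ^+ 2)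
        - sigma / 2 * sqnorm y.

Definition phi_pen (n m p : nat) (Y : set 'rV[R]_m) (f : 'rV[R]_n -> 'rV[R]_m -> R)
    (c : 'I_p -> 'rV[R]_n -> 'rV[R]_m -> R) (rho sigma : R) (x : 'rV[R]_n) : R :=
  sup [set psi f c rho sigma x y | y in Y].

(* y*_{rho,sigma}(x): the (unique, under the standing assumptions) maximizer
   of psi_{rho,sigma}(x,.) over Y *)
Definition ystar (n m p : nat) (Y : set 'rV[R]_m) (f : 'rV[R]_n -> 'rV[R]_m -> R)
    (c : 'I_p -> 'rV[R]_n -> 'rV[R]_m -> R) (rho sigma : R) (x : 'rV[R]_n)
    : 'rV[R]_m :=
  xget 0 [set y | Y y /\ forall z, Y z -> psi f c rho sigma x z <= psi f c rho sigma x y].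

Definition is_argmin (T : Type) (S : set T) (g : T -> R) (x : T) : Prop :=
  S x /\ forall z, S z -> g x <= g z.
Definition is_argmax (T : Type) (S : set T) (g : T -> R) (x : T) : Prop :=
  S x /\ forall z, S z -> g z <= g x.

Definition acc_point (T : topologicalType) (u : nat -> T) (a : T) : Prop :=
  exists k : nat -> nat, (forall j, (k j < k j.+1)%N) /\ (u \o k) @ \oo --> a.

End Defs.

(* Main.v *)
Require Import Defs.
From HB Require Import structures.
From mathcomp Require Import all_boot all_order all_algebra.
From mathcomp Require Import all_classical all_reals all_analysis.
From mathcomp Require Import lra.
Import Order.TTheory GRing.Theory Num.Theory.
Import numFieldNormedType.Exports.
Local Open Scope classical_set_scope.
Local Open Scope ring_scope.

Section Aux.
Variable R : realType.
Variables n m : nat.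

Lemma jcvg (F : 'rV[R]_n -> 'rV[R]_m -> R) x y T (Fl : set_system T) {FF : Filter Fl}
  (u : T -> 'rV[R]_n) (v : T -> 'rV[R]_m) :
 {for (x,y), continuous (fun q : 'rV[R]_n * 'rV[R]_m => F q.1 q.2)} ->
 u @ Fl --> x -> v @ Fl --> y -> (fun t => F (u t) (v t)) @ Fl --> F x y.
Proof.
move=> cF ux vy.
apply: (cvg_comp (fun t => (u t, v t)) (fun q : 'rV[R]_n * 'rV[R]_m => F q.1 q.2) _ cF).
exact: (cvg_pair ux vy).
Qed.

Lemma ycont (F : 'rV[R]_n -> 'rV[R]_m -> R) x y :
 {for (x,y), continuous (fun q : 'rV[R]_n * 'rV[R]_m => F q.1 q.2)} ->
 {for y, continuous (F x)}.
Proof.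
move=> cF; apply: (@jcvg F x y _ (nbhs y) _ (fun _ => x) id cF) => //.
exact: cvg_cst.
Qed.

Lemma sum_cont (T : Type) (s : seq T) (g : T -> 'rV[R]_m -> R) y :
  (forall i, {for y, continuous (g i)}) ->
  {for y, continuous (fun z => \sum_(i <- s) g i z)}.
Proof.
move=> cg; rewrite /prop_for /continuous_at; elim: s => [|a s IH].
  have -> : (fun z => \sum_(i <- [::]) g i z) = (fun=> 0).
    by apply: funext => z; rewrite big_nil.
  rewrite big_nil; apply: cvg_cst; exact: nbhs_filter.
have -> : (fun z => \sum_(i <- a :: s) g i z) =
   (g a \+ (fun z => \sum_(i <- s) g i z)).
  by apply: funext => z; rewrite big_cons.
rewrite big_cons; apply: cvgD. all: try exact: IH. exact: nbhs_filter. exact: (cg a).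
Qed.

Lemma subseq_near (k : nat -> nat) (P : nat -> Prop) :
  (forall j, (k j < k j.+1)%N) -> (\forall i \near \oo, P i) ->
  \forall j \near \oo, P (k j).
Proof.
move=> kinc [N _ HN]; exists N => // j /= Nj; apply: HN => /=.
have kj : forall j, (j <= k j)%N.
  elim=> [|i IH] //; exact: (leq_ltn_trans IH (kinc i)).
exact: (leq_trans Nj (kj j)).
Qed.

Lemma subseq_cvg (T : topologicalType) (k : nat -> nat) (u : nat -> T) (a : T) :
  (forall j, (k j < k j.+1)%N) -> u @ \oo --> a -> (u \o k) @ \oo --> a.
Proof.
move=> kinc ua P /ua uP.
exact: (subseq_near k _ kinc uP).
Qed.

Lemma lemr0 (a : R) : 0 <= Num.max a 0.
Proof. by rewrite le_max lexx orbT. Qed.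

Lemma lemra (a : R) : a <= Num.max a 0.
Proof. by rewrite le_max lexx. Qed.

Lemma small_sigma (sigma : nat -> R) (B e : R) : 0 <= B -> 0 < e ->
  (forall k, 0 < sigma k) -> sigma @ \oo --> 0 ->
  \forall k \near \oo, sigma k / 2 * B < e.
Proof.
move=> B0 e0 spos s0.
have d0 : 0 < e / (B + 1) by apply: divr_gt0 => //; lra.
have H := cvgr_lt _ s0 _ d0.
near=> k.
have sk : sigma k < e / (B + 1) by near: k; exact: H.
have : sigma k * (B + 1) < e by rewrite -ltr_pdivlMr //; lra.
have := spos k; nra.
Unshelve. all: by end_near.
Qed.

End Aux.
Section Main.
Variable R : realType.
Variables n m p : nat.
Variables (X : set 'rV[R]_n) (Y : set 'rV[R]_m)
    (f : 'rV[R]_n -> 'rV[R]_m -> R)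
    (c : 'I_p -> 'rV[R]_n -> 'rV[R]_m -> R).
Hypotheses (HYne : Y !=set0) (HYcpt : compact Y)
    (Hf : C11_on X Y f) (Hc : forall i, C11_on X Y (c i))
    (HTheta : forall x, X x -> Theta Y c x !=set0).

Lemma contf x y : X x -> Y y ->
  {for (x,y), continuous (fun q : 'rV[R]_n * 'rV[R]_m => f q.1 q.2)}.
Proof. move=> Xx Yy; exact: differentiable_continuous ((Hf.1) (x,y) Xx Yy). Qed.

Lemma contc i x y : X x -> Y y ->
  {for (x,y), continuous (fun q : 'rV[R]_n * 'rV[R]_m => c i q.1 q.2)}.
Proof. move=> Xx Yy; exact: differentiable_continuous ((Hc i).1 (x,y) Xx Yy). Qed.

Lemma maxY (g : 'rV[R]_m -> R) : (forall y, Y y -> {for y, continuous g}) ->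
  exists2 y0, Y y0 & forall y, Y y -> g y <= g y0.
Proof.
move=> cg.
have [y0 y0Y H] := EVT_max_rV HYne HYcpt (continuous_in_subspaceT
   (fun y (yY : y \in Y) => cg y (set_mem yY))).
exists y0; first exact: set_mem.
by move=> y Yy; apply: H; rewrite inE.
Qed.

Lemma minY (g : 'rV[R]_m -> R) : (forall y, Y y -> {for y, continuous g}) ->
  exists2 y0, Y y0 & forall y, Y y -> g y0 <= g y.
Proof.
move=> cg.
have [y0 y0Y H] := EVT_min_rV HYne HYcpt (continuous_in_subspaceT
   (fun y (yY : y \in Y) => cg y (set_mem yY))).
exists y0; first exact: set_mem.
by move=> y Yy; apply: H; rewrite inE.
Qed.

Lemma sq_cont (g : 'rV[R]_m -> R) y : {for y, continuous g} ->
  {for y, continuous (fun z => g z ^+ 2)}.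
Proof.
move=> cg.
have -> : (fun z => g z ^+ 2) = g \* g by apply: funext => z; rewrite expr2.
apply: cvgM; (try exact: nbhs_filter); exact: cg.
Qed.

Lemma max0_cont (g : 'rV[R]_m -> R) y : {for y, continuous g} ->
  {for y, continuous (fun z => Num.max (g z) 0)}.
Proof.
move=> cg.
have -> : (fun z => Num.max (g z) 0) = (fun z => (g z + 0 + `|g z - 0|) / 2).
  by apply: funext => z; rewrite maxr_absE.
apply: cvgM; (try exact: nbhs_filter); last by apply: cvg_cst; exact: nbhs_filter.
apply: cvgD; (try exact: nbhs_filter).
  apply: cvgD; (try exact: nbhs_filter); [exact: cg | apply: cvg_cst; exact: nbhs_filter].
have gB : (fun z => g z - 0) @ y --> g y - 0.
  apply: cvgB; (try exact: nbhs_filter); [exact: cg | apply: cvg_cst; exact: nbhs_filter].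
exact: (cvg_norm gB).
Qed.

Lemma sqnorm_cont y : {for y, continuous (@sqnorm R m)}.
Proof.
apply: sum_cont => i; apply: sq_cont; exact: coord_continuous.
Qed.

Lemma pen_cont x y : X x -> Y y ->
  {for y, continuous (fun z => \sum_(i < p) (Num.max (c i x z) 0) ^+ 2)}.
Proof.
move=> Xx Yy; apply: sum_cont => i; apply: sq_cont.
apply: max0_cont. apply: (@ycont R n m (c i) x y). exact: contc.
Qed.

Lemma psi_cont r s x y : X x -> Y y ->
  {for y, continuous (psi f c r s x)}.
Proof.
move=> Xx Yy.
have h1 := @ycont R n m f x y (@contf x y Xx Yy).
have h2 := @pen_cont x y Xx Yy.
have h3 := sqnorm_cont y.
have c1 : (fun _ : 'rV[R]_m => r / 2) @ y --> r / 2 by apply: cvg_cst; exact: nbhs_filter.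
have c2 : (fun _ : 'rV[R]_m => s / 2) @ y --> s / 2 by apply: cvg_cst; exact: nbhs_filter.
exact: (cvgB (cvgB h1 (cvgM c1 h2)) (cvgM c2 h3)).
Qed.


Lemma fub x : X x -> exists M, forall y, Y y -> f x y <= M.
Proof.
move=> Xx; have [y0 _ H] := @maxY (f x) (fun y Yy => @ycont R n m f x y (@contf x y Xx Yy)).
by exists (f x y0).
Qed.

Lemma phi_hs x : X x -> has_sup [set f x y | y in Theta Y c x].
Proof.
move=> Xx; split.
  by have [z Tz] := HTheta _ Xx; exists (f x z), z.
have [M HM] := fub _ Xx; exists M => _ [y [Yy _] <-]; exact: HM.
Qed.

Lemma phi_ub x z : X x -> Theta Y c x z -> f x z <= phi Y f c x.
Proof. move=> Xx Tz; rewrite /phi; apply: (sup_upper_bound (phi_hs _ Xx)); by exists z. Qed.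

Lemma phi_adh x e : X x -> 0 < e ->
  exists2 z, Theta Y c x z & phi Y f c x - e < f x z.
Proof.
move=> Xx e0; have [_ [z Tz <-] H] := sup_adherent e0 (phi_hs _ Xx).
by exists z.
Qed.

Lemma phi_pen_ub r s x B : (forall z, Y z -> psi f c r s x z <= B) ->
  phi_pen Y f c r s x <= B.
Proof.
move=> H; apply: ge_sup.
  by have [z Yz] := HYne; exists (psi f c r s x z), z.
by move=> _ [z Yz <-]; exact: H.
Qed.

Lemma psi_max r s x : X x -> exists2 y0, Y y0 &
  forall y, Y y -> psi f c r s x y <= psi f c r s x y0.
Proof. move=> Xx; exact: (@maxY (psi f c r s x) (fun y Yy => @psi_cont r s x y Xx Yy)). Qed.

Lemma phi_pen_lb r s x z : X x -> Y z -> psi f c r s x z <= phi_pen Y f c r s x.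
Proof.
move=> Xx Yz; apply: sup_upper_bound; last by exists z.
split; first by exists (psi f c r s x z), z.
have [y0 _ H] := psi_max r s _ Xx.
by exists (psi f c r s x y0) => _ [y Yy <-]; exact: H.
Qed.

Lemma ystarP r s x : X x -> Y (ystar Y f c r s x) /\
  forall z, Y z -> psi f c r s x z <= psi f c r s x (ystar Y f c r s x).
Proof.
move=> Xx; have [y0 Y0 H] := psi_max r s _ Xx.
by apply: (xgetPex 0 (P := [set y | Y y /\ forall z, Y z -> psi f c r s x z <= psi f c r s x y])); exists y0.
Qed.

Lemma phi_pen_ystar r s x : X x ->
  phi_pen Y f c r s x = psi f c r s x (ystar Y f c r s x).
Proof.
move=> Xx; have [Ys H] := ystarP r s _ Xx.
apply/le_anti/andP; split; first exact: phi_pen_ub.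
exact: phi_pen_lb.
Qed.

Lemma sqnorm_ge0 (y : 'rV[R]_m) : 0 <= sqnorm y.
Proof. by apply: sumr_ge0 => i _; exact: sqr_ge0. Qed.

Lemma pen_ge0 x y : 0 <= \sum_(i < p) (Num.max (c i x y) 0) ^+ 2.
Proof. by apply: sumr_ge0 => i _; exact: sqr_ge0. Qed.

Lemma sqB : exists B, 0 <= B /\ forall y : 'rV[R]_m, Y y -> sqnorm y <= B.
Proof.
have [y0 _ H] := @maxY (@sqnorm R m) (fun y _ => sqnorm_cont y).
by exists (sqnorm y0); split => //; exact: sqnorm_ge0.
Qed.

Lemma psi_le_f r s x y : 0 <= r -> 0 <= s -> psi f c r s x y <= f x y.
Proof.
move=> r0 s0; rewrite /psi.
have h1 := pen_ge0 x y; have h2 := sqnorm_ge0 y.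
have h3 : 0 <= r / 2 * \sum_(i < p) (Num.max (c i x y) 0) ^+ 2.
  by apply: mulr_ge0 => //; apply: divr_ge0.
have h4 : 0 <= s / 2 * sqnorm y by apply: mulr_ge0 => //; apply: divr_ge0.
lra.
Qed.

Lemma psi_theta r s x y B : Theta Y c x y -> sqnorm y <= B -> 0 <= s ->
  f x y - s / 2 * B <= psi f c r s x y.
Proof.
move=> [Yy cy] yB s0; rewrite /psi.
rewrite big1; last by move=> i _; rewrite max_r ?cy // expr2 mulr0.
rewrite mulr0 subr0 lerD2l lerN2; apply: ler_wpM2l => //; exact: divr_ge0.
Qed.

Lemma phi_le_pen r s x B : X x -> 0 <= s -> (forall y, Y y -> sqnorm y <= B) ->
  phi Y f c x <= phi_pen Y f c r s x + s / 2 * B.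
Proof.
move=> Xx s0 HB; apply/ler_addgt0Pr => e e0.
have [z Tz Hz] := phi_adh _ _ Xx e0.
have h1 := @psi_theta r s x z B Tz (HB z Tz.1) s0.
have h2 := phi_pen_lb r s _ _ Xx Tz.1.
lra.
Qed.


Lemma pen_limsup x e (rho sigma : nat -> R) : X x -> 0 < e ->
  (forall k, 0 < rho k) -> (forall k, 0 < sigma k) -> rho @ \oo --> +oo ->
  \forall k \near \oo, phi_pen Y f c (rho k) (sigma k) x <= phi Y f c x + e.
Proof.
move=> Xx e0 rpos spos rinf.
set P := phi Y f c x.
pose pen := fun z => \sum_(i < p) (Num.max (c i x z) 0) ^+ 2.
pose q := fun z => pen z + Num.max (P + e - f x z) 0.
have qc : forall z, Y z -> {for z, continuous q}.
  move=> z Yz.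
  have h1 := @pen_cont x z Xx Yz.
  have h2 : (fun w => P + e - f x w) @ z --> P + e - f x z.
    have c1 : (fun _ : 'rV[R]_m => P + e) @ z --> P + e.
      by apply: cvg_cst; exact: nbhs_filter.
    exact: (cvgB c1 (@ycont R n m f x z (@contf x z Xx Yz))).
  have h3 := @max0_cont _ z h2.
  exact: (cvgD h1 h3).
have [y0 Y0 Hq] := @minY q qc.
have pen0 : forall z, 0 <= pen z by move=> z; exact: pen_ge0.
have dpos : 0 < q y0.
  rewrite lt_def; apply/andP; split; last first.
    by apply: addr_ge0 => //; exact: lemr0.
  apply/eqP => q0.
  have hm0 : 0 <= Num.max (P + e - f x y0) 0 by exact: lemr0.
  have hp : pen y0 = 0 by have := pen0 y0; rewrite /q in q0; lra.
  have hm : Num.max (P + e - f x y0) 0 = 0 by have := pen0 y0; rewrite /q in q0; lra.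
  have Ty0 : Theta Y c x y0.
    split => // i.
    have := @psumr_eq0P _ _ xpredT (fun i => (Num.max (c i x y0) 0) ^+ 2)
      (fun i _ => sqr_ge0 _) hp i.
    move=> /(_ isT) /eqP; rewrite sqrf_eq0 => /eqP h.
    by rewrite -h lemra.
  have := @phi_ub x y0 Xx Ty0; rewrite -/P.
  have := @lemra R (P + e - f x y0); rewrite hm; lra.
have [M HM] := fub _ Xx.
move/cvgryPgt: rinf => /(_ ((M - P) / (q y0 / 2))) rinf.
near=> k; apply: phi_pen_ub => z Yz.
have rk : M - P < rho k * (q y0 / 2).
  by rewrite -ltr_pdivrMr ?divr_gt0 //; near: k.
have [fz|fz] := leP (P + e) (f x z); last first.
  have := @psi_le_f (rho k) (sigma k) x z (ltW (rpos k)) (ltW (spos k)) => h; exact: (le_trans h (ltW fz)).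
have m0 : Num.max (P + e - f x z) 0 = 0 by apply: max_r; rewrite subr_le0.
have qz : q y0 <= pen z by have := Hq z Yz; rewrite {2}/q m0 addr0.
have h1 : rho k / 2 * q y0 <= rho k / 2 * pen z.
  by apply: ler_wpM2l; [apply: divr_ge0; exact: ltW | lra].
have h2 : 0 <= sigma k / 2 * sqnorm z.
  by apply: mulr_ge0; [apply: divr_ge0; exact: ltW | exact: sqnorm_ge0].
have h3 : rho k / 2 * q y0 = rho k * (q y0 / 2) by rewrite mulrAC mulrA.
have := HM z Yz; rewrite /psi -/(pen z); lra.
Unshelve. all: by end_near.
Qed.


Lemma main_sec (HXcpt : compact X) (Hlsc : lsc_on X (phi Y f c))
    (rho sigma : nat -> R) (xs : nat -> 'rV[R]_n)
    (Hrho_pos : forall k, 0 < rho k) (Hsigma_pos : forall k, 0 < sigma k)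
    (Hrho : rho @ \oo --> +oo) (Hsigma : sigma @ \oo --> 0)
    (Hxs : forall k, is_argmin X (phi_pen Y f c (rho k) (sigma k)) (xs k)) :
  (forall xbar, acc_point xs xbar -> is_argmin X (phi Y f c) xbar) /\
  (forall (kj : nat -> nat) (xbar : 'rV[R]_n),
      (forall j, (kj j < kj j.+1)%N) -> (xs \o kj) @ \oo --> xbar ->
      forall ybar,
        acc_point (fun j => ystar Y f c (rho (kj j)) (sigma (kj j)) (xs (kj j))) ybar ->
        is_argmax (Theta Y c xbar) (f xbar) ybar).
Proof.
have [B [B0 HB]] := sqB.
have Xc : closed X := compact_closed (@norm_hausdorff _ _) HXcpt.
have Yc : closed Y := compact_closed (@norm_hausdorff _ _) HYcpt.
split.
  move=> xbar [k [kinc xk]].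
  have Xb : X xbar.
    apply: (closed_cvg X Xc _ xbar xk); apply: nearW => j; exact: (Hxs _).1.
  split => // z Xz; apply/ler_addgt0Pr => e e0.
  have e3 : 0 < e / 3 by apply: divr_gt0.
  have E1 := xk _ (Hlsc xbar Xb (phi Y f c xbar - e / 3) ltac:(lra)).
  have E2 := subseq_near k _ kinc (@pen_limsup z (e / 3) rho sigma Xz e3 Hrho_pos Hsigma_pos Hrho).
  have E3 := subseq_near k _ kinc (@small_sigma R sigma B (e / 3) B0 e3 Hsigma_pos Hsigma).
  suff H : \forall j \near \oo, phi Y f c xbar < phi Y f c z + e.
    by have [j /ltW] := filter_ex H.
  near=> j.
  have e1 : phi Y f c xbar - e / 3 < phi Y f c (xs (k j)).
    by apply: (_ : X (xs (k j)) -> _) (Hxs _).1; near: j; exact: E1.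
  have e2 : phi_pen Y f c (rho (k j)) (sigma (k j)) z <= phi Y f c z + e / 3.
    by near: j; exact: E2.
  have e3' : sigma (k j) / 2 * B < e / 3 by near: j; exact: E3.
  have e4 := @phi_le_pen (rho (k j)) (sigma (k j)) (xs (k j)) B (Hxs (k j)).1 (ltW (Hsigma_pos (k j))) HB.
  have e5 := (Hxs (k j)).2 z Xz.
  lra.
move=> kj xbar kinc xk ybar [l [linc yl]].
pose xj := fun j => xs (kj (l j)).
pose rj := fun j => rho (kj (l j)).
pose sj := fun j => sigma (kj (l j)).
pose yj := fun j => ystar Y f c (rj j) (sj j) (xj j).
have xjc : xj @ \oo --> xbar := @subseq_cvg _ l _ _ linc xk.
have yjc : yj @ \oo --> ybar := yl.
have Xj : forall j, X (xj j) by move=> j; exact: (Hxs _).1.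
have Yj : forall j, Y (yj j) by move=> j; exact: (ystarP _ _ _ (Xj j)).1.
have Xb : X xbar by apply: (closed_cvg X Xc _ xbar xjc); exact: nearW.
have Yb : Y ybar by apply: (closed_cvg Y Yc _ ybar yjc); exact: nearW.
have fc : (fun j => f (xj j) (yj j)) @ \oo --> f xbar ybar.
  exact: (@jcvg R n m f xbar ybar _ _ _ xj yj (@contf xbar ybar Xb Yb) xjc yjc).
have sjc : sj @ \oo --> 0 by exact: (@subseq_cvg _ l (sigma \o kj) 0 linc (@subseq_cvg _ kj sigma 0 kinc Hsigma)).
have sjpos : forall j, 0 < sj j by move=> j; exact: Hsigma_pos.
have rjpos : forall j, 0 < rj j by move=> j; exact: Hrho_pos.
have rjinf : forall A, \forall j \near \oo, A < rj j.
  move=> A; have H1 : \forall i \near \oo, A < rho i by move/cvgryPgt: Hrho; apply.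
  have H2 := subseq_near l (fun i => A < rho (kj i)) linc
            (subseq_near kj (fun i => A < rho i) kinc H1).
  exact: H2.
have K : forall j, phi Y f c (xj j) - sj j / 2 * B <= psi f c (rj j) (sj j) (xj j) (yj j).
  move=> j; rewrite /yj -phi_pen_ystar //.
  have := @phi_le_pen (rj j) (sj j) (xj j) B (Xj j) (ltW (sjpos j)) HB; lra.
have lscb : forall a, a < phi Y f c xbar -> \forall j \near \oo, a < phi Y f c (xj j).
  move=> a ha; have H := xjc _ (Hlsc xbar Xb a ha).
  near=> j.
  have H' : X (xj j) -> a < phi Y f c (xj j) by near: j; exact: H.
  exact: H' (Xj j).
have clim : forall i, c i xbar ybar <= 0.
  move=> i; rewrite leNgt; apply/negP => dpos.
  set d := c i xbar ybar in dpos.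
  have cc : (fun j => c i (xj j) (yj j)) @ \oo --> d.
    exact: (@jcvg R n m (c i) xbar ybar _ _ _ xj yj (@contc i xbar ybar Xb Yb) xjc yjc).
  have F1 := cvgr_gt _ cc _ (ltac:(lra) : d / 2 < d).
  have F2 := cvgr_lt _ fc _ (ltac:(lra) : f xbar ybar < f xbar ybar + 1).
  have F3 := lscb (phi Y f c xbar - 1) ltac:(lra).
  have F4 := @small_sigma R sj B 1 B0 ltr01 sjpos sjc.
  have F5 := rjinf ((f xbar ybar - phi Y f c xbar + 3) / (d ^+ 2 / 8)).
  suff : \forall j \near \oo, False by move=> /filter_ex [].
  near=> j.
  have f1 : d / 2 < c i (xj j) (yj j) by near: j; exact: F1.
  have f2 : f (xj j) (yj j) < f xbar ybar + 1 by near: j; exact: F2.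
  have f3 : phi Y f c xbar - 1 < phi Y f c (xj j) by near: j; exact: F3.
  have f4 : sj j / 2 * B < 1 by near: j; exact: F4.
  have f5 : (f xbar ybar - phi Y f c xbar + 3) / (d ^+ 2 / 8) < rj j by near: j; exact: F5.
  have d2 : 0 < d ^+ 2 / 8 by apply: divr_gt0 => //; exact: exprn_gt0.
  rewrite ltr_pdivrMr // in f5.
  set t := Num.max (c i (xj j) (yj j)) 0.
  have tc : c i (xj j) (yj j) <= t by exact: lemra.
  have t2 : d ^+ 2 / 4 <= t ^+ 2 by rewrite !expr2; nra.
  have pent : t ^+ 2 <= \sum_(i0 < p) Num.max (c i0 (xj j) (yj j)) 0 ^+ 2.
    rewrite (bigD1 i) //= lerDl; apply: sumr_ge0 => i0 _; exact: sqr_ge0.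
  have Kj := K j; rewrite /psi in Kj.
  have sq0 : 0 <= sj j / 2 * sqnorm (yj j).
    by apply: mulr_ge0; [apply: divr_ge0; [exact: ltW|] | exact: sqnorm_ge0].
  have r1 : rj j / 2 * t ^+ 2 <= rj j / 2 * \sum_(i0 < p) Num.max (c i0 (xj j) (yj j)) 0 ^+ 2.
    by apply: ler_wpM2l => //; apply: divr_ge0 => //; exact: ltW.
  have r2 : rj j * (d ^+ 2 / 8) <= rj j / 2 * t ^+ 2.
    have := rjpos j; rewrite !expr2 in t2 *; nra.
  lra.
have fge : phi Y f c xbar <= f xbar ybar.
  apply/ler_addgt0Pr => e e0.
  have e3 : 0 < e / 3 by apply: divr_gt0.
  have F2 := cvgr_lt _ fc _ (ltac:(lra) : f xbar ybar < f xbar ybar + e / 3).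
  have F3 := lscb (phi Y f c xbar - e / 3) ltac:(lra).
  have F4 := @small_sigma R sj B (e / 3) B0 e3 sjpos sjc.
  suff H : \forall j \near \oo, phi Y f c xbar < f xbar ybar + e.
    by have [j /ltW] := filter_ex H.
  near=> j.
  have f2 : f (xj j) (yj j) < f xbar ybar + e / 3 by near: j; exact: F2.
  have f3 : phi Y f c xbar - e / 3 < phi Y f c (xj j) by near: j; exact: F3.
  have f4 : sj j / 2 * B < e / 3 by near: j; exact: F4.
  have := K j.
  have := @psi_le_f (rj j) (sj j) (xj j) (yj j) (ltW (rjpos j)) (ltW (sjpos j)).
  lra.
split; first by split.
move=> z Tz; exact: (le_trans (@phi_ub xbar z Xb Tz) fge).
Unshelve. all: by end_near.
Qed.

End Main.

Theorem theorem2p4 (R : realType) (n m p : nat)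
    (X : set 'rV[R]_n) (Y : set 'rV[R]_m)
    (f : 'rV[R]_n -> 'rV[R]_m -> R)
    (c : 'I_p -> 'rV[R]_n -> 'rV[R]_m -> R)
    (* standing assumptions *)
    (HXne : X !=set0) (HXcvx : convex_set X) (HXcpt : compact X)
    (HYne : Y !=set0) (HYcvx : convex_set Y) (HYcpt : compact Y)
    (Hf : C11_on X Y f)
    (Hfconc : forall x, X x -> concave_on Y (f x))
    (Hc : forall i, C11_on X Y (c i))
    (Hccvx : forall i x, X x -> convex_on Y (c i x))
    (HTheta : forall x, X x -> Theta Y c x !=set0)
    (* hypotheses of the theorem *)
    (Hlsc : lsc_on X (phi Y f c))
    (rho sigma : nat -> R) (xs : nat -> 'rV[R]_n)
    (Hrho_pos : forall k, 0 < rho k) (Hsigma_pos : forall k, 0 < sigma k)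
    (Hrho : rho @ \oo --> +oo) (Hsigma : sigma @ \oo --> 0)
    (Hxs : forall k, is_argmin X (phi_pen Y f c (rho k) (sigma k)) (xs k)) :
  (forall xbar, acc_point xs xbar -> is_argmin X (phi Y f c) xbar) /\
  (forall (kj : nat -> nat) (xbar : 'rV[R]_n),
      (forall j, (kj j < kj j.+1)%N) -> (xs \o kj) @ \oo --> xbar ->
      forall ybar,
        acc_point (fun j => ystar Y f c (rho (kj j)) (sigma (kj j)) (xs (kj j))) ybar ->
        is_argmax (Theta Y c xbar) (f xbar) ybar).
Proof.
exact: (@main_sec R n m p X Y f c HYne HYcpt Hf Hc HTheta HXcpt Hlsc rho sigma xs
  Hrho_pos Hsigma_pos Hrho Hsigma Hxs).
Qed.
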